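(* Let $G^*$ be a finite graph in which every vertex and every edge is contained in a triangle, and consider the domination game on $G^*$ in which Dominator makes the odd-numbered moves and always plays greedily (as defined in the context), while Staller plays arbitrary legal moves. If $i$ is odd and the $i$th turn belongs to Phase 1, then either $g_i+g_{i+1}\ge 72$, or the game ends with the $i$th turn and $g_i>36$.
   Context: For a vertex $v$, $N[v]$ is $v$ together with its neighbors, $N[S]=\bigcup_{v\in S}N[v]$. Domination game: Dominator (odd turns) and Staller (even turns) alternately choose vertices $p_1,p_2,\dots$; with $D_i=\{p_1,\dots,p_i\}$ ($D_0=\emptyset$) each move must satisfy $N[p_i]\setminus N[D_{i-1}]\neq\emptyset$; the game ends when $N[D_i]=V(G^* )$. After turn $i$ ($i\ge0$) a vertex $v$ is white if $v\notin N[D_i]$, blue if $v\in N[D_i]$ but $N[v]\not\subseteq N[D_i]$, and red if $N[v]\subseteq N[D_i]$. The W-degree of $v$ after turn $i$ is its number of white neighbors. Phases: for odd $i$, if after turn $i-1$ there is a white vertex of W-degree at least $4$ or a blue vertex of W-degree at least $5$, then turns $i$ and $i+1$ (if it exists) belong to Phase 1; otherwise they belong to Phase 2. In Phase 1 the weight of a vertex is $20$ if white, $12$ if blue, $0$ if red; the weight after turn $i$ is the sum of vertex weights, and $g_i$ is the weight after turn $i-1$ minus the weight after turn $i$. Dominator plays greedily: in each of his turns he chooses a legal vertex maximizing $g_i$. *)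

(* Defs.v *)
From mathcomp Require Import all_boot all_order all_algebra.
Set Implicit Arguments. Unset Strict Implicit. Unset Printing Implicit Defensive.
Import GRing.Theory Num.Theory.

Section Game.
Variables (T : finType) (e : rel T).

Definition cnbh (v : T) : {set T} := [set u | (u == v) || e v u].
(* N[D] for D given as the sequence of moves played so far *)
Definition cnbhS (D : seq T) : {set T} := \bigcup_(v <- D) cnbh v.

Definition white (D : seq T) (v : T) : bool := v \notin cnbhS D.
Definition red (D : seq T) (v : T) : bool := cnbh v \subset cnbhS D.
Definition blue (D : seq T) (v : T) : bool := (v \in cnbhS D) && ~~ red D v.
Definition wdeg (D : seq T) (v : T) : nat := #|[set u | e v u & white D u]|.

Definition legal (D : seq T) (p : T) : bool := ~~ (cnbh p \subset cnbhS D).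

(* Phase-1 condition evaluated on the state D (after turn i-1) *)
Definition phase1 (D : seq T) : bool :=
  [exists v, (white D v && (4 <= wdeg D v)) || (blue D v && (5 <= wdeg D v))].

Definition vweight (D : seq T) (v : T) : nat :=
  if white D v then 20 else if red D v then 0 else 12.
Definition weight (D : seq T) : nat := \sum_(v : T) vweight D v.

(* g_i for the (1-indexed) game sequence s : weight after turn i-1 minus
   weight after turn i *)
Definition gain (s : seq T) (i : nat) : int :=
  ((weight (take i.-1 s))%:Z - (weight (take i s))%:Z)%R.

Definition complete_game (s : seq T) : Prop :=
  (forall k, k < size s -> forall x0 : T, legal (take k s) (nth x0 s k)) /\
  cnbhS s = [set: T].

(* Dominator (odd turns i = k+1, k even) plays greedily in Phase 1 turns *)
Definition greedy_dominator (s : seq T) : Prop :=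
  forall k, k < size s -> ~~ odd k -> phase1 (take k s) ->
    forall v, legal (take k s) v ->
      ((weight (take k s))%:Z - (weight (rcons (take k s) v))%:Z
      <= gain s k.+1)%R.

End Game.

Definition every_vertex_in_triangle (T : finType) (e : rel T) : Prop :=
  forall v, exists u w, [/\ e v u, e v w & e u w].
Definition every_edge_in_triangle (T : finType) (e : rel T) : Prop :=
  forall u v, e u v -> exists w, e u w /\ e v w.

(* Main.v *)
Require Import Defs.
From mathcomp Require Import all_boot all_order all_algebra.
From mathcomp Require Import zify.
Import Order.TTheory GRing.Theory Num.Theory.

Section Aux.
Variables (T : finType) (e : rel T).

Lemma cnbhS_rcons (D : seq T) (x : T) :
  cnbhS e (rcons D x) = cnbhS e D :|: cnbh e x.
Proof. by rewrite /cnbhS -cats1 big_cat big_seq1. Qed.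

Lemma vw_drop (D : seq T) (x y : T) : legal e D x ->
  (vweight e (rcons D x) y + 8 * (y \in cnbh e x :\: cnbhS e D)
     + 12 * (y == x) <= vweight e D y)%N.
Proof.
rewrite /legal /vweight /white /red cnbhS_rcons => hl.
have xx : x \in cnbh e x by rewrite inE eqxx.
case: (eqVneq y x) => [->|nyx].
  rewrite subsetUr in_setU in_setD xx orbT /= andbT (negPf hl).
  by case: (x \in cnbhS e D).
rewrite muln0 addn0 in_setD.
case hyA: (y \in cnbhS e D) => /=.
  rewrite muln0 addn0 in_setU hyA /=.
  case hs: (cnbh e y \subset cnbhS e D).
    by rewrite (subset_trans hs (subsetUl _ _)).
  by case: (cnbh e y \subset _).
rewrite in_setU hyA /=.
by case: (y \in cnbh e x) => //=; case: ifP.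
Qed.

Lemma gain_lb (D : seq T) (x : T) : legal e D x ->
  (weight e (rcons D x) + 8 * #|cnbh e x :\: cnbhS e D| + 12 <= weight e D)%N.
Proof.
move=> hl; rewrite /weight -addnA.
have -> : (8 * #|cnbh e x :\: cnbhS e D| + 12 =
   \sum_(y : T) (8 * (y \in cnbh e x :\: cnbhS e D) + 12 * (y == x)))%N.
  rewrite big_split /= -!big_distrr /= -sum1_card big_mkcond /=.
  have -> : (\sum_(i : T) (i == x) = 1)%N.
    by rewrite (bigD1 x) //= eqxx big1 // => y /negPf ->.
  by rewrite muln1; congr (_ * _ + _)%N; apply: eq_bigr => y _; case: (_ \in _).
rewrite -big_split /=.
by apply: leq_sum => y _; rewrite addnA; apply: vw_drop.
Qed.

End Aux.

Local Open Scope ring_scope.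

Theorem lemma2 (T : finType) (e : rel T)
  (esym : symmetric e) (eirr : irreflexive e)
  (hv : every_vertex_in_triangle e) (he : every_edge_in_triangle e)
  (s : seq T) (hgame : complete_game e s) (hgreedy : greedy_dominator e s)
  (i : nat) (hodd : odd i) (hi : (0 < i <= size s)%N)
  (hph : phase1 e (take i.-1 s)) :
  ((i < size s)%N /\ 72 <= gain e s i + gain e s i.+1)
  \/ (cnbhS e (take i s) = [set: T] /\ 36 < gain e s i).
Proof.
case: hgame => hleg hend.
case/andP: hi => i0 hsz.
set D := take i.-1 s.
have hk : (i.-1 < size s)%N by lia.
have hev : ~~ odd i.-1 by move: hodd; case: i i0 {hk hsz D hph} => //= n _; rewrite negbK.
have g52 : 52 <= gain e s i.
  case/existsP: (hph) => x hx.
  have hbig : (5 <= #|cnbh e x :\: cnbhS e D|)%N.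
    case/orP: hx => /andP [hw hd].
      have sub : x |: [set u | e x u & white e D u] \subset cnbh e x :\: cnbhS e D.
        apply/subsetP => u; rewrite !inE => /orP [/eqP ->|/andP [hxu hwu]].
          by rewrite eqxx andbT; exact: hw.
        by rewrite hxu orbT andbT; exact: hwu.
      apply: leq_trans (subset_leq_card sub).
      rewrite cardsU1 inE eirr /=.
      by move: hd; rewrite /wdeg.
    have sub : [set u | e x u & white e D u] \subset cnbh e x :\: cnbhS e D.
      apply/subsetP => u; rewrite !inE => /andP [hxu hwu].
      by rewrite hxu orbT andbT; exact: hwu.
    exact: leq_trans hd (subset_leq_card sub).
  have hlx : legal e D x.
    rewrite /legal; apply/negP => hs.
    move: hbig; rewrite (_ : cnbh e x :\: cnbhS e D = set0) ?cards0 //.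
    by apply/setP => u; rewrite in_setD in_set0; apply/negbTE/andP => -[h1 h2]; rewrite (subsetP hs u h2) in h1.
  have := hgreedy _ hk hev hph x hlx.
  rewrite (prednK i0) -/D => hg.
  have := @gain_lb _ e _ _ hlx.
  move: hg; set a := weight e _; set b := weight e _; move=> hg hlb.
  apply: le_trans hg.
  have : (52 + b <= a)%N by lia.
  move=> h; lia.
case: (ltnP i (size s)) => his.
  left; split => //.
  have x0 : T.
    have : (0 < size s)%N by lia.
    by case: (s) => [|y t]...
  have hl := hleg i his x0.
  have := @gain_lb _ e _ _ hl.
  rewrite -take_nth // => hlb.
  have g20 : 20 <= gain e s i.+1.
    rewrite /gain /=.
    have : (20 + weight e (take i.+1 s) <= weight e (take i s))%N.
      have : (0 < #|cnbh e (nth x0 s i) :\: cnbhS e (take i s)|)%N.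
        apply/card_gt0P; move: hl; rewrite /legal => /subsetPn [u hu hn].
        by exists u; rewrite inE hn.
      lia.
    move=> h; lia.
  have := lerD g52 g20.
  by apply: le_trans.
right; have his' : i = size s by apply/eqP; rewrite eqn_leq hsz his.
split; first by rewrite his' take_size.
by apply: lt_le_trans g52.
Qed.
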